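(* Take $N=2$. For $\sigma,\tau\in\{X,Y,Z\}$ let $C(\sigma,\tau)_{01}=\tfrac12(I+\sigma_0)+\tfrac12(I-\sigma_0)\tau_1$ (so $C(Z,X)_{01}=\mathrm{CX}_{01}$ and $C(Z,Z)_{01}=\mathrm{CZ}_{01}$). Then: (i) the nine frames $C(\sigma,\tau)_{01}\cdot B_0$ (backward action) lie in nine pairwise distinct EEF classes, none of which equals $[B_0]$; and (ii) for all unitaries $L_1,L_2$ in the group generated by single-qubit Clifford gates and $\mathrm{SWAP}_{01}$, the frame $(L_2\,\mathrm{CX}_{01}\,L_1)\cdot B_0$ lies in one of these nine EEF classes. Consequently, in $[\mathrm{PFG}_N]$ each vertex has, for each pair of qubits, exactly nine neighbours reachable by a single two-qubit entangling gate on that pair.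
   Context: Pauli space: $\mathcal P$ is the set of $N$-qubit Pauli operators modulo overall phase, an $\mathbb F_2$-vector space with addition given by product (mod phase); $\lambda(p,q)\in\mathbb F_2$ is $0$ if $p,q$ commute and $1$ otherwise. A Pauli frame is an ordered tuple $B=\{(s_i,\tilde s_i)\}_{0\le i<N}$ of elements of $\mathcal P$ with $\lambda(s_i,s_j)=\lambda(\tilde s_i,\tilde s_j)=0$, $\lambda(s_i,\tilde s_j)=\delta_{ij}$. The origin frame is $B_0=\{(Z_i,X_i)\}_i$. For a frame $B$ let $\phi_B$ be the linear map of $\mathcal P$ with $\phi_B(Z_i)=s_i$, $\phi_B(X_i)=\tilde s_i$. The backward action of a Clifford unitary $V$ on a frame $B$ is $V\cdot B:=\{(\phi_B(V^\dagger Z_iV),\phi_B(V^\dagger X_iV))\}_i$ (mod phase); in particular $V\cdot B_0=\{(V^\dagger Z_iV,V^\dagger X_iV)\}_i$. $\bar E_N$ is the group of actions on frames generated by the backward actions of $\mathrm{SWAP}_{ij}$, Hadamard $H_i$ and phase gate $P_i=R_Z(\pi/2)$. The EEF class of $B$ is $[B]=\{\gamma\cdot B:\gamma\in\bar E_N\}$. $[\mathrm{PFG}_N]$ is the graph on EEF classes with $[B_1],[B_2]$ adjacent iff $B_2'=\mathrm{CX}_{ij}\cdot B_1'$ for some $B_1'\in[B_1]$, $B_2'\in[B_2]$, $i\neq j$. *)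

(* Defs.v *)
From mathcomp Require Import all_boot.
From Stdlib Require Import Relations.
Set Implicit Arguments. Unset Strict Implicit. Unset Printing Implicit Defensive.

(* A Pauli mod phase is given, qubit by qubit, by its (Z-bit, X-bit):
   I = (false,false), Z = (true,false), X = (false,true), Y = (true,true). *)
Definition pauli (N : nat) := {ffun 'I_N -> bool * bool}.

(* group law of P (product mod phase) = F_2 addition *)
Definition padd N (p q : pauli N) : pauli N :=
  [ffun k => ((p k).1 (+) (q k).1, (p k).2 (+) (q k).2)].
Definition pzero N : pauli N := [ffun _ => (false, false)].

Definition Zq N (i : 'I_N) : pauli N := [ffun k => (k == i, false)].
Definition Xq N (i : 'I_N) : pauli N := [ffun k => (false, k == i)].
Definition Yq N (i : 'I_N) : pauli N := padd (Zq i) (Xq i).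

(* lambda(p,q) : false iff p and q commute *)
Definition lam N (p q : pauli N) : bool :=
  \big[addb/false]_(k < N) (((p k).1 && (q k).2) (+) ((p k).2 && (q k).1)).

(* B i = (s_i, s~_i) *)
Definition frame (N : nat) := {ffun 'I_N -> pauli N * pauli N}.

Definition is_frame N (B : frame N) : Prop :=
  forall i j : 'I_N,
    lam (B i).1 (B j).1 = false /\ lam (B i).2 (B j).2 = false /\
    lam (B i).1 (B j).2 = (i == j).

Definition origin N : frame N := [ffun i => (Zq i, Xq i)].

Definition phi N (B : frame N) (p : pauli N) : pauli N :=
  \big[@padd N/pzero N]_(k < N)
     padd (if (p k).1 then (B k).1 else pzero N)
          (if (p k).2 then (B k).2 else pzero N).

(* ---------- Clifford unitaries via their conjugation action ----------
   A Clifford unitary V is represented by its map c_V : p |-> V^dag p V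
   (mod phase) on P; this is all that the backward action uses.  For a
   product, c_(V W) = c_W \o c_V. *)

Definition act N (c : pauli N -> pauli N) (B : frame N) : frame N :=
  [ffun i => (phi B (c (Zq i)), phi B (c (Xq i)))].

Definition cH N (i : 'I_N) (p : pauli N) : pauli N :=
  [ffun k => if k == i then ((p k).2, (p k).1) else p k].
(* phase gate P_i = R_Z(pi/2): P^dag Z P = Z, P^dag X P = -Y, P^dag Y P = X *)
Definition cP N (i : 'I_N) (p : pauli N) : pauli N :=
  [ffun k => if k == i then ((p k).1 (+) (p k).2, (p k).2) else p k].
Definition cSWAP N (i j : 'I_N) (p : pauli N) : pauli N :=
  [ffun k => if k == i then p j else if k == j then p i else p k].

(* Controlled gate C = 1/2 (I + s) + 1/2 (I - s) t for commuting Hermitian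
   Paulis s, t (C = C^dag).  One computes C p C = p, p t, p s, p s t (mod
   phase) according to whether p anticommutes with neither, s only, t only,
   or both. *)
Definition cCtrl N (s t : pauli N) (p : pauli N) : pauli N :=
  padd p (padd (if lam p s then t else pzero N) (if lam p t then s else pzero N)).

Inductive pauli1 := PX | PY | PZ.
Definition pq N (a : pauli1) (i : 'I_N) : pauli N :=
  match a with PX => Xq i | PY => Yq i | PZ => Zq i end.

Definition cC N (a b : pauli1) (i j : 'I_N) : pauli N -> pauli N :=
  cCtrl (pq a i) (pq b j).
Definition cCX N (i j : 'I_N) : pauli N -> pauli N := cCtrl (Zq i) (Xq j).

(* one step of the group bar E_N (generated by backward actions of SWAP, H, P),
   in either direction (so the closure below is the orbit of the group) *)
Definition gen_conj N (c : pauli N -> pauli N) : Prop :=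
  (exists i j : 'I_N, c = cSWAP i j) \/ (exists i, c = cH i) \/ (exists i, c = cP i).

Definition eef_step N (B1 B2 : frame N) : Prop :=
  exists c, gen_conj c /\ (B2 = act c B1 \/ B1 = act c B2).

Definition EEF N : relation (frame N) := clos_refl_trans (frame N) (@eef_step N).

Definition pfg_adj N (B1 B2 : frame N) : Prop :=
  exists (B1' B2' : frame N) (i j : 'I_N),
    i != j /\ EEF B1 B1' /\ EEF B2 B2' /\ B2' = act (cCX i j) B1'.

(* ---------- group generated by single-qubit Cliffords and SWAP ----------
   (conjugation maps; the single-qubit Clifford group mod phase is generated
   by H and P) *)
Inductive locCliff N : (pauli N -> pauli N) -> Prop :=
| lc_id : locCliff (fun p => p)
| lc_H i : locCliff (cH i)
| lc_P i : locCliff (cP i)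
| lc_SWAP i j : locCliff (cSWAP i j)
| lc_comp f g : locCliff f -> locCliff g -> locCliff (fun p => f (g p))
| lc_inv f g : locCliff f -> cancel f g -> cancel g f -> locCliff g.

Definition q0 : 'I_2 := ord0.
Definition q1 : 'I_2 := ord_max.

(* Main.v *)
Require Import Defs.
From mathcomp Require Import all_boot.
From Stdlib Require Import Relations Btauto.
From HB Require Import structures.
Set Implicit Arguments. Unset Strict Implicit. Unset Printing Implicit Defensive.

Record P4 := mkP { pz0 : bool; px0 : bool; pz1 : bool; px1 : bool }.
Record F4 := mkF { s0 : P4; t0 : P4; s1 : P4; t1 : P4 }.

Definition beqP (a b : P4) :=
  [&& pz0 a == pz0 b, px0 a == px0 b, pz1 a == pz1 b & px1 a == px1 b].
Lemma beqP_ax : Equality.axiom beqP.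
Proof.
move=> [a b c d] [a' b' c' d']; rewrite /beqP /=; apply: (iffP idP).
  by case/and4P=> /eqP-> /eqP-> /eqP-> /eqP->.
by case=> -> -> -> ->; rewrite !eqxx.
Qed.
HB.instance Definition _ := hasDecEq.Build P4 beqP_ax.
Definition beqF (a b : F4) :=
  [&& s0 a == s0 b, t0 a == t0 b, s1 a == s1 b & t1 a == t1 b].
Lemma beqF_ax : Equality.axiom beqF.
Proof.
move=> [a b c d] [a' b' c' d']; rewrite /beqF /=; apply: (iffP idP).
  by case/and4P=> /eqP-> /eqP-> /eqP-> /eqP->.
by case=> -> -> -> ->; rewrite !eqxx.
Qed.
HB.instance Definition _ := hasDecEq.Build F4 beqF_ax.

Definition eqp1 (a b : pauli1) := match a, b with
 | PX, PX | PY, PY | PZ, PZ => true | _, _ => false end.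
Lemma eqp1_ax : Equality.axiom eqp1.
Proof. by case; case; constructor. Qed.
HB.instance Definition _ := hasDecEq.Build pauli1 eqp1_ax.

Definition addP (a b : P4) := mkP (xorb (pz0 a) (pz0 b)) (xorb (px0 a) (px0 b))
  (xorb (pz1 a) (pz1 b)) (xorb (px1 a) (px1 b)).
Definition zP := mkP false false false false.
Definition scP (b : bool) (v : P4) := mkP (b && pz0 v) (b && px0 v) (b && pz1 v) (b && px1 v).
Definition lamF (p q : P4) :=
  xorb (xorb (pz0 p && px0 q) (px0 p && pz0 q)) (xorb (pz1 p && px1 q) (px1 p && pz1 q)).
Definition phiF (M : F4) (x : P4) :=
  addP (addP (addP (scP (pz0 x) (s0 M)) (scP (px0 x) (t0 M))) (scP (pz1 x) (s1 M)))
       (scP (px1 x) (t1 M)).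
Definition compF (M A : F4) := mkF (phiF M (s0 A)) (phiF M (t0 A)) (phiF M (s1 A)) (phiF M (t1 A)).
Definition ez0 := mkP true false false false.
Definition ex0 := mkP false true false false.
Definition ez1 := mkP false false true false.
Definition ex1 := mkP false false false true.
Definition idF := mkF ez0 ex0 ez1 ex1.
Definition matOf (f : P4 -> P4) := mkF (f ez0) (f ex0) (f ez1) (f ex1).
Definition ctrlF (s t p : P4) :=
  addP p (addP (if lamF p s then t else zP) (if lamF p t then s else zP)).
Definition pqF (a : pauli1) (i : bool) : P4 :=
  match a, i with
  | PX, false => ex0 | PZ, false => ez0 | PY, false => mkP true true false false
  | PX, true => ex1 | PZ, true => ez1 | PY, true => mkP false false true true end.
Definition cmat a b := matOf (ctrlF (pqF a false) (pqF b true)).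
Definition Xm := matOf (ctrlF ez0 ex1).
Definition X10 := matOf (ctrlF ez1 ex0).

Inductive gc := GH0 | GH1 | GP0 | GP1 | GS.
Definition gmat (c : gc) : F4 := match c with
 | GH0 => mkF ex0 ez0 ez1 ex1
 | GH1 => mkF ez0 ex0 ex1 ez1
 | GP0 => mkF ez0 (mkP true true false false) ez1 ex1
 | GP1 => mkF ez0 ex0 ez1 (mkP false false true true)
 | GS => mkF ez1 ex1 ez0 ex0 end.
Definition gens := [:: GH0; GH1; GP0; GP1; GS].
Fixpoint matW (w : seq gc) : F4 := match w with [::] => idF | c :: w' => compF (gmat c) (matW w') end.
Fixpoint grow (n : nat) (l : seq (seq gc * F4)) := match n with 0 => l | n'.+1 =>
  grow n' (foldl (fun acc wm => foldl (fun acc c => let M := compF (gmat c) wm.2 in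
     if M \in map snd acc then acc else rcons acc (c :: wm.1, M)) acc gens) l l) end.
Definition GW0 : seq (seq gc) := map fst (grow 8 [:: ([::], idF)]).
Definition GW : seq (seq gc) := locked GW0.
Definition GM0 := map matW GW0.
Definition GM : seq F4 := locked GM0.
Lemma GM_map : GM = map matW GW. Proof. rewrite /GM /GW; unlock; reflexivity. Qed.
Definition p1s := [:: PX; PY; PZ].

Lemma chk_size : size GM = 72. Proof. rewrite /GM; unlock. by vm_compute. Qed.
Lemma chk_clos : all (fun M1 => all (fun M2 => compF M1 M2 \in GM) GM) GM.
Proof. rewrite /GM; unlock. by vm_compute. Qed.
Lemma chk_inv : all (fun M => has (fun M' => compF M M' == idF) GM) GM.
Proof. rewrite /GM; unlock. by vm_compute. Qed.
Lemma chk_gen : all (fun c => (gmat c \in GM) && (compF (gmat c) (gmat c) == idF)) gens && (idF \in GM).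
Proof. rewrite /GM; unlock. by vm_compute. Qed.
Lemma chk_dist : all (fun a => all (fun b => all (fun a' => all (fun b' => all (fun M =>
   (compF (cmat a b) M == cmat a' b') ==> (a == a') && (b == b')) GM) p1s) p1s) p1s) p1s.
Proof. rewrite /GM; unlock. by vm_compute. Qed.
Lemma chk_norig : all (fun a => all (fun b => cmat a b \notin GM) p1s) p1s.
Proof. rewrite /GM; unlock. by vm_compute. Qed.
Lemma chk_adj : all (fun a => all (fun b => has (fun M => has (fun M' =>
   compF (cmat a b) M' == compF M Xm) GM) GM) p1s) p1s.
Proof. rewrite /GM; unlock. by vm_compute. Qed.
Lemma chk_cov : all (fun M1 => all (fun X => has (fun a => has (fun b => has (fun M =>
   cmat a b == compF (compF M1 X) M) GM) p1s) p1s) [:: Xm; X10]) GM.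
Proof. rewrite /GM; unlock. by vm_compute. Qed.
Ltac dP x := destruct x as [? ? ? ?].
Ltac dF M := destruct M as [[? ? ? ?] [? ? ? ?] [? ? ? ?] [? ? ? ?]].
Ltac peq := unfold invF, compF, matOf, idF; unfold phiF, addP, scP, lamF, matOf, ez0, ex0, ez1, ex1; simpl; unfold lamF, ez0, ex0, ez1, ex1; simpl; repeat match goal with
 | |- mkP _ _ _ _ = mkP _ _ _ _ => f_equal
 | |- mkF _ _ _ _ = mkF _ _ _ _ => f_equal end; btauto.

Lemma phiF_add M x y : phiF M (addP x y) = addP (phiF M x) (phiF M y).
Proof. dF M; dP x; dP y; peq. Qed.
Lemma phiF_sc M b x : phiF M (scP b x) = scP b (phiF M x).
Proof. dF M; dP x; peq. Qed.
Lemma phiF_comp A B x : phiF (compF A B) x = phiF A (phiF B x).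
Proof. rewrite {3}/phiF !phiF_add !phiF_sc //. Qed.
Lemma compFA M A B : compF (compF M A) B = compF M (compF A B).
Proof. by rewrite /compF !phiF_comp. Qed.
Lemma phiF_id x : phiF idF x = x.
Proof. dP x; peq. Qed.
Lemma compF_id_l A : compF idF A = A.
Proof. by rewrite /compF !phiF_id; case: A. Qed.
Lemma compF_id_r A : compF A idF = A.
Proof. dF A; peq. Qed.
Lemma matOf_phi M : matOf (phiF M) = M.
Proof. dF M; peq. Qed.

Definition invF (M : F4) :=
  let iv v := mkP (lamF v (t0 M)) (lamF v (s0 M)) (lamF v (t1 M)) (lamF v (s1 M)) in
  mkF (iv ez0) (iv ex0) (iv ez1) (iv ex1).
Lemma phiF_inv M x : phiF (invF M) x =
  mkP (lamF x (t0 M)) (lamF x (s0 M)) (lamF x (t1 M)) (lamF x (s1 M)).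
Proof. dF M; case: x => [[] [] [] []]; peq. Qed.
Lemma lamF_sym p q : lamF p q = lamF q p.
Proof. dP p; dP q; rewrite /lamF /=; btauto. Qed.
Lemma lamF_self p : lamF p p = false.
Proof. dP p; rewrite /lamF /=; btauto. Qed.

Definition sympF (M : F4) :=
  lamF (s0 M) (t0 M) = true /\ lamF (s1 M) (t1 M) = true /\
  lamF (s0 M) (t1 M) = false /\ lamF (s1 M) (t0 M) = false /\
  lamF (s0 M) (s1 M) = false /\ lamF (t0 M) (t1 M) = false.
Lemma invF_l M : sympF M -> compF (invF M) M = idF.
Proof.
case: M => a b c d; rewrite /sympF /= => [[h1 [h2 [h3 [h4 [h5 h6]]]]]].
rewrite /compF !phiF_inv /=.
rewrite (lamF_sym b a) (lamF_sym b c) (lamF_sym c a) (lamF_sym d b) (lamF_sym d a) (lamF_sym d c).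
by rewrite !lamF_self h1 h2 h3 h4 h5 h6.
Qed.

Lemma ord2 (i : 'I_2) : i = q0 \/ i = q1.
Proof. case: i => [[|[|m]] H]; [left|right|]; try (by apply/val_inj). by []. Qed.
Lemma q10 : (q1 == q0) = false. Proof. by []. Qed.

Definition fromP (p : pauli 2) := mkP (p q0).1 (p q0).2 (p q1).1 (p q1).2.
Definition fromF (B : frame 2) :=
  mkF (fromP (B q0).1) (fromP (B q0).2) (fromP (B q1).1) (fromP (B q1).2).
Definition toP (x : P4) : pauli 2 :=
  [ffun k => if k == q0 then (pz0 x, px0 x) else (pz1 x, px1 x)].
Definition toB (M : F4) : frame 2 :=
  [ffun k => if k == q0 then (toP (s0 M), toP (t0 M)) else (toP (s1 M), toP (t1 M))].

Lemma fromP_toP x : fromP (toP x) = x.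
Proof. by rewrite /fromP !ffunE eqxx q10; case: x. Qed.
Lemma fromF_toB M : fromF (toB M) = M.
Proof. by rewrite /fromF !ffunE eqxx q10 /= !fromP_toP; case: M. Qed.
Lemma fromP_inj p q : fromP p = fromP q -> p = q.
Proof.
case=> H1 H2 H3 H4; apply/ffunP=> k; case: (ord2 k)=> ->.
  by rewrite [p q0]surjective_pairing H1 H2; case: (q q0).
by rewrite [p q1]surjective_pairing H3 H4; case: (q q1).
Qed.
Lemma fromF_inj B B' : fromF B = fromF B' -> B = B'.
Proof.
move=> H.
have H1 := fromP_inj (f_equal s0 H); have H2 := fromP_inj (f_equal t0 H).
have H3 := fromP_inj (f_equal s1 H); have H4 := fromP_inj (f_equal t1 H).
apply/ffunP=> k.
case: (ord2 k)=> ->.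
  by rewrite [B q0]surjective_pairing H1 H2; case: (B' q0).
by rewrite [B q1]surjective_pairing H3 H4; case: (B' q1).
Qed.

Lemma addbX a b : a (+) b = xorb a b. Proof. by case: a; case: b. Qed.
Lemma fromP_padd p q : fromP (padd p q) = addP (fromP p) (fromP q).
Proof. by rewrite /fromP /padd !ffunE /= !addbX. Qed.
Lemma fromP_pzero : fromP (pzero 2) = zP.
Proof. by rewrite /fromP !ffunE. Qed.
Lemma fromP_if b u : fromP (if b then u else pzero 2) = scP b (fromP u).
Proof. case: b; last exact: fromP_pzero. by rewrite /scP; case: (fromP u). Qed.
Lemma fromP_ifP b u v : fromP (if b then u else v) = if b then fromP u else fromP v.
Proof. by case: b. Qed.
Lemma fromP_Z0 : fromP (Zq q0) = ez0. Proof. by rewrite /fromP !ffunE. Qed.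
Lemma fromP_Z1 : fromP (Zq q1) = ez1. Proof. by rewrite /fromP !ffunE. Qed.
Lemma fromP_X0 : fromP (Xq q0) = ex0. Proof. by rewrite /fromP !ffunE. Qed.
Lemma fromP_X1 : fromP (Xq q1) = ex1. Proof. by rewrite /fromP !ffunE. Qed.

Lemma lift01 : lift ord0 (ord0 : 'I_1) = q1. Proof. by apply/val_inj. Qed.

Lemma lam_from p q : lam p q = lamF (fromP p) (fromP q).
Proof.
rewrite /lam big_ord_recl big_ord1 lift01 /lamF /fromP -/q0.
by case: (p q0) (p q1) (q q0) (q q1) => [[] []] [[] []] [[] []] [[] []].
Qed.

Lemma phi_gen a b c d A Bv C D :
  addP (addP (scP a A) (scP b Bv)) (addP (addP (scP c C) (scP d D)) zP) = phiF (mkF A Bv C D) (mkP a b c d).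
Proof. dP A; dP Bv; dP C; dP D; peq. Qed.

Lemma phi_from B p : fromP (phi B p) = phiF (fromF B) (fromP p).
Proof.
rewrite /phi big_ord_recl big_ord_recl big_ord0 lift01 -/q0 !fromP_padd !fromP_if fromP_pzero.
by rewrite phi_gen.
Qed.

Lemma act_rep c cf B : (forall p, fromP (c p) = cf (fromP p)) ->
  fromF (act c B) = compF (fromF B) (matOf cf).
Proof.
move=> H; rewrite /fromF /act !ffunE /= !phi_from !H.
by rewrite fromP_Z0 fromP_Z1 fromP_X0 fromP_X1.
Qed.
Lemma act_lin c M B : (forall p, fromP (c p) = phiF M (fromP p)) ->
  fromF (act c B) = compF (fromF B) M.
Proof. by move=> H; rewrite (act_rep _ H) matOf_phi. Qed.
Lemma fromF_origin : fromF (origin 2) = idF.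
Proof. by rewrite /fromF !ffunE /= fromP_Z0 fromP_Z1 fromP_X0 fromP_X1. Qed.

Lemma ctrl_rep s t p : fromP (cCtrl s t p) = ctrlF (fromP s) (fromP t) (fromP p).
Proof.
rewrite /cCtrl !fromP_padd !fromP_ifP !lam_from /ctrlF.
by rewrite !fromP_pzero.
Qed.

Ltac bcase p := rewrite /fromP; case: (p q0) => [[] []]; case: (p q1) => [[] []]; by [].

Definition gfun (c : gc) : pauli 2 -> pauli 2 := match c with
 | GH0 => cH q0 | GH1 => cH q1 | GP0 => cP q0 | GP1 => cP q1 | GS => cSWAP q0 q1 end.
Lemma gfun_rep c p : fromP (gfun c p) = phiF (gmat c) (fromP p).
Proof.
case: c; rewrite /= /fromP /cH /cP /cSWAP !ffunE;
  case: (p q0) => [[] []]; case: (p q1) => [[] []]; by [].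
Qed.
Lemma swapid_rep i p : fromP (cSWAP i i p) = phiF idF (fromP p).
Proof.
rewrite phiF_id; congr fromP; apply/ffunP=> k; rewrite ffunE.
by case: eqP => // ->.
Qed.
Lemma swap10_rep p : fromP (cSWAP q1 q0 p) = phiF (gmat GS) (fromP p).
Proof.
rewrite /= /fromP /cSWAP !ffunE; case: (p q0) => [[] []]; case: (p q1) => [[] []]; by [].
Qed.
Lemma gfun_conj c : gen_conj (gfun c).
Proof.
case: c; rewrite /gen_conj /=.
- by right; left; exists q0.
- by right; left; exists q1.
- by right; right; exists q0.
- by right; right; exists q1.
- by left; exists q0, q1.
Qed.

Lemma GM_clos M1 M2 : M1 \in GM -> M2 \in GM -> compF M1 M2 \in GM.
Proof. by move=> h1 h2; move/allP: chk_clos => /(_ _ h1) /allP /(_ _ h2). Qed.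
Lemma GM_inv M : M \in GM -> exists2 M', M' \in GM & compF M M' = idF.
Proof. by move=> h; move/allP: chk_inv => /(_ _ h) /hasP [M' h' /eqP e]; exists M'. Qed.
Lemma GM_id : idF \in GM.
Proof. by case/andP: chk_gen. Qed.
Lemma gmat_ok c : gmat c \in GM /\ compF (gmat c) (gmat c) = idF.
Proof. by rewrite /GM; unlock; case: c; split; vm_compute. Qed.

Lemma genconj_rep c : gen_conj c -> exists M, [/\ M \in GM, compF M M = idF &
   forall p, fromP (c p) = phiF M (fromP p)].
Proof.
case=> [[i [j ->]] | [[i ->] | [i ->]]].
- case: (ord2 i) => ->; case: (ord2 j) => ->.
  + by exists idF; split; [exact GM_id| exact: compF_id_l| exact: swapid_rep].
  + by exists (gmat GS); case: (gmat_ok GS) => h1 h2; split => // p; exact: (gfun_rep GS).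
  + by exists (gmat GS); case: (gmat_ok GS) => h1 h2; split => // p; exact: swap10_rep.
  + by exists idF; split; [exact GM_id| exact: compF_id_l| exact: swapid_rep].
- case: (ord2 i) => ->.
  + by exists (gmat GH0); case: (gmat_ok GH0) => h1 h2; split => // p; exact: (gfun_rep GH0).
  + by exists (gmat GH1); case: (gmat_ok GH1) => h1 h2; split => // p; exact: (gfun_rep GH1).
- case: (ord2 i) => ->.
  + by exists (gmat GP0); case: (gmat_ok GP0) => h1 h2; split => // p; exact: (gfun_rep GP0).
  + by exists (gmat GP1); case: (gmat_ok GP1) => h1 h2; split => // p; exact: (gfun_rep GP1).
Qed.

Lemma sound B1 B2 : EEF B1 B2 -> exists2 M, M \in GM & fromF B2 = compF (fromF B1) M.
Proof.
elim=> {B1 B2}.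
- move=> B1 B2 [c [/genconj_rep [M [hM hMM hc]] [->|->]]].
    by exists M => //; exact: act_lin.
  exists M => //; rewrite (act_lin _ hc) compFA hMM compF_id_r //.
- by move=> B; exists idF; [exact GM_id| rewrite compF_id_r].
- move=> B1 B2 B3 _ [M1 h1 e1] _ [M2 h2 e2].
  by exists (compF M1 M2); [exact: GM_clos| rewrite e2 e1 compFA].
Qed.

Lemma complete_w w : forall B B', fromF B' = compF (fromF B) (matW w) -> EEF B B'.
Proof.
elim: w => [|c w IH] B B' H.
  by rewrite compF_id_r in H; rewrite (fromF_inj H); apply: rt_refl.
apply: (rt_trans _ _ _ (act (gfun c) B)).
  apply: rt_step; exists (gfun c); split; [exact: gfun_conj| by left].
apply: IH; rewrite (act_lin _ (gfun_rep c)) compFA; exact: H.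
Qed.
Lemma in_map_ex (s : seq (seq gc)) M : M \in map matW s -> exists w, M = matW w.
Proof.
elim: s => [|w s IH] //=; rewrite inE => /orP [/eqP ->|/IH //]; by exists w.
Qed.
Lemma complete M B B' : M \in GM -> fromF B' = compF (fromF B) M -> EEF B B'.
Proof. rewrite GM_map => /in_map_ex [w ->]; exact: complete_w. Qed.

Lemma loc_rep f : locCliff f -> exists2 M, M \in GM & forall p, fromP (f p) = phiF M (fromP p).
Proof.
elim=> {f}.
- by exists idF; [exact GM_id| move=> p; rewrite phiF_id].
- move=> i; have [M [h1 _ h3]] := @genconj_rep (cH i) (or_intror (or_introl (ex_intro _ i erefl))).
  by exists M.
- move=> i; have [M [h1 _ h3]] := @genconj_rep (cP i) (or_intror (or_intror (ex_intro _ i erefl))).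
  by exists M.
- move=> i j; have [M [h1 _ h3]] := @genconj_rep (cSWAP i j) (or_introl (ex_intro _ i (ex_intro _ j erefl))).
  by exists M.
- move=> f g _ [Mf hf ef] _ [Mg hg eg]; exists (compF Mf Mg); first exact: GM_clos.
  by move=> p; rewrite ef eg phiF_comp.
- move=> f g _ [Mf hf ef] fg gf.
  have [M' h' e'] := GM_inv hf; exists M' => // p.
  pose q := toP (phiF M' (fromP p)).
  have fq : f q = p by apply: fromP_inj; rewrite ef fromP_toP -phiF_comp e' phiF_id.
  by rewrite -fq fg fromP_toP -fq.
Qed.

Lemma pq_from0 a : fromP (pq a q0) = pqF a false.
Proof. by case: a; rewrite /= ?/Yq ?fromP_padd ?fromP_Z0 ?fromP_X0. Qed.
Lemma pq_from1 a : fromP (pq a q1) = pqF a true.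
Proof. by case: a; rewrite /= ?/Yq ?fromP_padd ?fromP_Z1 ?fromP_X1. Qed.
Lemma cC_act a b B : fromF (act (cC a b q0 q1) B) = compF (fromF B) (cmat a b).
Proof. by apply: act_rep => p; rewrite /cC ctrl_rep pq_from0 pq_from1. Qed.
Lemma CX01_rep p : fromP (cCX q0 q1 p) = phiF Xm (fromP p).
Proof. rewrite /cCX ctrl_rep fromP_Z0 fromP_X1; case: (fromP p) => [[] [] [] []]; by []. Qed.
Lemma CX10_rep p : fromP (cCX q1 q0 p) = phiF X10 (fromP p).
Proof. rewrite /cCX ctrl_rep fromP_Z1 fromP_X0; case: (fromP p) => [[] [] [] []]; by []. Qed.

Lemma inp1 a : a \in p1s. Proof. by case: a. Qed.

Lemma dist a b a' b' M : M \in GM -> cmat a' b' = compF (cmat a b) M -> a = a' /\ b = b'.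
Proof.
move=> hM e.
move/allP: chk_dist => /(_ a (inp1 a)) /allP /(_ b (inp1 b)) /allP /(_ a' (inp1 a'))
  /allP /(_ b' (inp1 b')) /allP /(_ M hM).
by rewrite -e eqxx /= => /andP [/eqP -> /eqP ->].
Qed.

Lemma cov M1 X : M1 \in GM -> X \in [:: Xm; X10] ->
  exists a b, exists2 M, M \in GM & cmat a b = compF (compF M1 X) M.
Proof.
move=> h1 hX; move/allP: chk_cov => /(_ M1 h1) /allP /(_ X hX) /hasP [a _ /hasP [b _ /hasP [M hM /eqP e]]].
by exists a, b, M.
Qed.

Definition abl := [:: (PX,PX);(PX,PY);(PX,PZ);(PY,PX);(PY,PY);(PY,PZ);(PZ,PX);(PZ,PY);(PZ,PZ)].

Theorem mainTheorem5 :
  (* (i) nine pairwise distinct EEF classes, none equal to [B0] *)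
  (forall a b a' b' : pauli1,
      EEF (act (cC a b q0 q1) (origin 2)) (act (cC a' b' q0 q1) (origin 2)) ->
      a = a' /\ b = b') /\
  (forall a b : pauli1, ~ EEF (origin 2) (act (cC a b q0 q1) (origin 2))) /\
  (* (ii) (L2 CX01 L1) . B0 lies in one of these classes; its conjugation
     map is c_L1 \o c_CX \o c_L2 *)
  (forall L1 L2 : pauli 2 -> pauli 2, locCliff L1 -> locCliff L2 ->
      exists a b : pauli1,
        EEF (act (fun p => L1 (cCX q0 q1 (L2 p))) (origin 2))
            (act (cC a b q0 q1) (origin 2))) /\
  (* consequence: every vertex of [PFG_2] has exactly nine neighbours *)
  (forall B : frame 2, is_frame B ->
      exists Bs : 'I_9 -> frame 2,
        (forall k, pfg_adj B (Bs k)) /\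
        (forall k l, EEF (Bs k) (Bs l) -> k = l) /\
        (forall B', pfg_adj B B' -> exists k, EEF B' (Bs k))).
Proof.
split.
  move=> a b a' b' /sound [M hM]; rewrite !cC_act fromF_origin !compF_id_l => e.
  exact: dist hM e.
split.
  move=> a b /sound [M hM]; rewrite cC_act fromF_origin !compF_id_l => e.
  move/allP: chk_norig => /(_ a (inp1 a)) /allP /(_ b (inp1 b)).
  by rewrite e hM.
split.
  move=> L1 L2 /loc_rep [M1 h1 e1] /loc_rep [M2 h2 e2].
  have [a [b [M hM ec]]] := cov h1 (mem_head _ _).
  have [M2' h2' e2'] := GM_inv h2.
  exists a, b; apply: (@complete (compF M2' M)); first exact: GM_clos.
  rewrite cC_act fromF_origin compF_id_l.
  have -> : fromF (act (fun p => L1 (cCX q0 q1 (L2 p))) (origin 2)) =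
            compF (fromF (origin 2)) (compF (compF M1 Xm) M2).
    by apply: act_lin => p; rewrite e1 CX01_rep e2 !phiF_comp.
  by rewrite fromF_origin compF_id_l compFA -(compFA M2) e2' compF_id_l.
move=> B HB.
have hS : sympF (fromF B).
  have [h00 [h00' h00'']] := HB q0 q0.
  have [h11 [h11' h11'']] := HB q1 q1.
  have [h01 [h01' h01'']] := HB q0 q1.
  have [h10 [h10' h10'']] := HB q1 q0.
  move: h00'' h11'' h01'' h10'' h01 h01'; rewrite !lam_from /sympF /= => -> -> -> -> -> ->.
  by [].
exists (fun k : 'I_9 => act (cC (nth (PX,PX) abl k).1 (nth (PX,PX) abl k).2 q0 q1) B).
split.
  move=> k; set a := (nth _ _ _).1; set b := (nth _ _ _).2.
  move/allP: chk_adj => /(_ a (inp1 a)) /allP /(_ b (inp1 b)) /hasP [M hM /hasP [M' hM' /eqP e]].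
  exists (toB (compF (fromF B) M)), (act (cCX q0 q1) (toB (compF (fromF B) M))), q0, q1.
  split; first by [].
  split; first by apply: (complete hM); rewrite fromF_toB.
  split; last by [].
  apply: (complete hM'); rewrite (act_lin _ CX01_rep) fromF_toB cC_act.
  by rewrite !compFA e.
split.
  move=> k l /sound [M hM]; rewrite !cC_act => e.
  have := f_equal (compF (invF (fromF B))) e.
  rewrite -!compFA invF_l // !compF_id_l => /(dist hM) [ea eb].
  have enth : nth (PX,PX) abl k = nth (PX,PX) abl l.
    by rewrite [nth _ _ k]surjective_pairing ea eb -surjective_pairing.
  apply/val_inj => /=; apply/eqP; rewrite -(@nth_uniq _ (PX,PX) abl) //; by apply/eqP.
move=> B' [B1 [B2 [i [j [hij [E1 [E2 EB]]]]]]].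
have [M1 h1 e1] := sound E1.
have [M2 h2 e2] := sound E2.
have [X [hX eX]] : exists X, X \in [:: Xm; X10] /\ fromF B2 = compF (compF (fromF B) M1) X.
  case: (ord2 i) hij EB => ->; case: (ord2 j) => -> // _ ->.
  - by exists Xm; split; [exact: mem_head| rewrite (act_lin _ CX01_rep) e1].
  - by exists X10; split; [by rewrite in_cons mem_seq1 eqxx orbT| rewrite (act_lin _ CX10_rep) e1].
have [a [b [M hM ec]]] := cov h1 hX.
have hab : (a, b) \in abl by case: a {ec}; case: b.
have hi : index (a,b) abl < 9 by rewrite index_mem.
exists (Ordinal hi).
apply: (@complete (compF M2 M)); first exact: GM_clos.
rewrite /= nth_index // cC_act ec -!compFA -eX e2.
by rewrite !compFA.
Qed.
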